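(* If $K\subset L^1$ is uniformly integrable, then its closed convex hull in $L^1$ is also uniformly integrable.
   Context: $(\Omega,\mathcal F)$ is a measurable space, $\mathcal H$ a linear space of $\mathcal F$-measurable real functions containing the constants, closed under $X\mapsto|X|$ and $X\mapsto I_AX$ ($A\in\mathcal F$), and $\mathcal E:\mathcal H\to\mathbb R$ is a sublinear expectation (monotone, constant preserving, subadditive, positively homogeneous) with the monotone continuity property ($X_i\downarrow 0$ pointwise implies $\mathcal E(X_i)\to0$). $\|X\|_1:=\mathcal E(|X|)$ and $L^1$ is the completion of $\{X\in\mathcal H:\|X\|_1<\infty\}$ under this seminorm modulo null elements. A set $K\subset L^1$ is uniformly integrable if $\sup_{X\in K}\mathcal E(I_{\{|X|\ge c\}}|X|)\to0$ as $c\to\infty$. *)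

(* Defs.v *)
From Stdlib Require Import Reals Lra Classical ClassicalEpsilon.
Open Scope R_scope.

Record sigma_algebra {Omega : Type} (F : (Omega -> Prop) -> Prop) : Prop := {
  sa_full : F (fun _ => True);
  sa_compl : forall A, F A -> F (fun w => ~ A w);
  sa_union : forall A : nat -> Omega -> Prop,
      (forall n, F (A n)) -> F (fun w => exists n, A n w)
}.

Definition measurable {Omega : Type} (F : (Omega -> Prop) -> Prop)
  (X : Omega -> R) : Prop := forall a : R, F (fun w => X w <= a).

Definition indic {Omega : Type} (A : Omega -> Prop) (X : Omega -> R) : Omega -> R :=
  fun w => if excluded_middle_informative (A w) then X w else 0.

Record function_space {Omega : Type} (F : (Omega -> Prop) -> Prop)
  (H : (Omega -> R) -> Prop) : Prop := {
  fs_meas : forall X, H X -> measurable F X;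
  fs_const : forall c : R, H (fun _ => c);
  fs_add : forall X Y, H X -> H Y -> H (fun w => X w + Y w);
  fs_scal : forall (a : R) X, H X -> H (fun w => a * X w);
  fs_abs : forall X, H X -> H (fun w => Rabs (X w));
  fs_indic : forall A X, F A -> H X -> H (indic A X)
}.

(* E : H -> R sublinear expectation (E is total, axioms only on H). *)
Record sublinear_expectation {Omega : Type} (H : (Omega -> R) -> Prop)
  (E : (Omega -> R) -> R) : Prop := {
  se_mono : forall X Y, H X -> H Y -> (forall w, X w <= Y w) -> E X <= E Y;
  se_const : forall c : R, E (fun _ => c) = c;
  se_subadd : forall X Y, H X -> H Y -> E (fun w => X w + Y w) <= E X + E Y;
  se_poshom : forall (l : R) X, 0 <= l -> H X -> E (fun w => l * X w) = l * E X
}.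

Definition monotone_continuous {Omega : Type} (H : (Omega -> R) -> Prop)
  (E : (Omega -> R) -> R) : Prop :=
  forall Xs : nat -> Omega -> R,
    (forall n, H (Xs n)) ->
    (forall n w, Xs (S n) w <= Xs n w) ->
    (forall w, Un_cv (fun n => Xs n w) 0) ->
    Un_cv (fun n => E (Xs n)) 0.

Definition L1_approx {Omega : Type} (H : (Omega -> R) -> Prop)
  (E : (Omega -> R) -> R) (X : Omega -> R) (Xs : nat -> Omega -> R) : Prop :=
  (forall n, H (Xs n)) /\
  (forall w, Un_cv (fun n => Xs n w) (X w)) /\
  (forall eps, eps > 0 -> exists N : nat, forall n m, (n >= N)%nat -> (m >= N)%nat ->
      E (fun w => Rabs (Xs n w - Xs m w)) < eps).

(* Concrete model of the completion L^1: functions that are pointwise limits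
   of ||.||_1-Cauchy sequences of H (elements identified modulo ||.||_1-null). *)
Definition inL1 {Omega : Type} (H : (Omega -> R) -> Prop)
  (E : (Omega -> R) -> R) (X : Omega -> R) : Prop :=
  exists Xs, L1_approx H E X Xs.

(* Extension of E to L^1: E(X) = lim E(X_n) along an approximating sequence. *)
Definition E1 {Omega : Type} (H : (Omega -> R) -> Prop)
  (E : (Omega -> R) -> R) (X : Omega -> R) : R :=
  epsilon (inhabits 0%R) (fun r => exists Xs, L1_approx H E X Xs /\
                                   Un_cv (fun n => E (Xs n)) r).

Definition uniformly_integrable {Omega : Type} (H : (Omega -> R) -> Prop)
  (E : (Omega -> R) -> R) (K : (Omega -> R) -> Prop) : Prop :=
  (forall X, K X -> inL1 H E X) /\
  (forall eps, eps > 0 -> exists c0 : R, forall c, c >= c0 -> forall X, K X ->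
      E1 H E (indic (fun w => Rabs (X w) >= c) (fun w => Rabs (X w))) <= eps).

Definition convex_hull {Omega : Type} (K : (Omega -> R) -> Prop)
  (Y : Omega -> R) : Prop :=
  exists (n : nat) (lam : nat -> R) (Xs : nat -> Omega -> R),
    (forall i, (i <= n)%nat -> 0 <= lam i /\ K (Xs i)) /\
    sum_f_R0 lam n = 1 /\
    (forall w, Y w = sum_f_R0 (fun i => lam i * Xs i w) n).

Definition L1_closure {Omega : Type} (H : (Omega -> R) -> Prop)
  (E : (Omega -> R) -> R) (S : (Omega -> R) -> Prop) (Y : Omega -> R) : Prop :=
  inL1 H E Y /\
  (forall eps, eps > 0 -> exists Z, S Z /\ E1 H E (fun w => Rabs (Y w - Z w)) < eps).

(* Main.v *)
Require Import Defs.
From Stdlib Require Import Reals Lra Lia Classical ClassicalEpsilon FunctionalExtensionality PropExtensionality.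
Open Scope R_scope.


Lemma H_sub {Omega} {F} {H : (Omega -> R) -> Prop} (HH : function_space F H) X Y :
  H X -> H Y -> H (fun w => X w - Y w).
Proof.
  intros hx hy.
  replace (fun w => X w - Y w) with (fun w => X w + (-1) * Y w).
  - apply (fs_add _ _ HH); auto. apply (fs_scal _ _ HH); auto.
  - apply functional_extensionality; intro w; ring.
Qed.

Lemma H_absdiff {Omega} {F} {H : (Omega -> R) -> Prop} (HH : function_space F H) X Y :
  H X -> H Y -> H (fun w => Rabs (X w - Y w)).
Proof. intros; apply (fs_abs _ _ HH (fun w => X w - Y w)); apply (H_sub HH); auto. Qed.

Lemma H_max0 {Omega} {F} {H : (Omega -> R) -> Prop} (HH : function_space F H) X :
  H X -> H (fun w => Rmax (X w) 0).
Proof.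
  intros hx.
  replace (fun w => Rmax (X w) 0) with (fun w => /2 * (X w + Rabs (X w))).
  - apply (fs_scal _ _ HH). apply (fs_add _ _ HH); auto. apply (fs_abs _ _ HH); auto.
  - apply functional_extensionality; intro w.
    unfold Rmax; destruct (Rle_dec (X w) 0);
    [rewrite Rabs_left1 by lra | rewrite Rabs_right by lra]; field.
Qed.

Lemma E_mono {Omega} {H : (Omega -> R) -> Prop} {E} (HE : sublinear_expectation H E) X Y :
  H X -> H Y -> (forall w, X w <= Y w) -> E X <= E Y.
Proof. apply (se_mono _ _ HE). Qed.

Lemma E_nonneg {Omega} {F} {H : (Omega -> R) -> Prop} {E} (HH : function_space F H)
  (HE : sublinear_expectation H E) X :
  H X -> (forall w, 0 <= X w) -> 0 <= E X.
Proof.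
  intros hx h. rewrite <- (se_const _ _ HE 0).
  apply (se_mono _ _ HE); auto. apply (fs_const _ _ HH).
Qed.

Lemma E_diff {Omega} {F} {H : (Omega -> R) -> Prop} {E} (HH : function_space F H)
  (HE : sublinear_expectation H E) X Y :
  H X -> H Y -> E X - E Y <= E (fun w => Rabs (X w - Y w)).
Proof.
  intros hx hy.
  assert (E X <= E Y + E (fun w => X w - Y w)).
  { replace X with (fun w => Y w + (X w - Y w)) at 1.
    - apply (se_subadd _ _ HE); auto. apply (H_sub HH); auto.
    - apply functional_extensionality; intro; ring. }
  assert (E (fun w => X w - Y w) <= E (fun w => Rabs (X w - Y w))).
  { apply (se_mono _ _ HE). apply (H_sub HH); auto. apply (H_absdiff HH); auto.
    intro; apply Rle_abs. }
  lra.
Qed.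

Lemma E_absdiff {Omega} {F} {H : (Omega -> R) -> Prop} {E} (HH : function_space F H)
  (HE : sublinear_expectation H E) X Y :
  H X -> H Y -> Rabs (E X - E Y) <= E (fun w => Rabs (X w - Y w)).
Proof.
  intros hx hy. pose proof (E_diff HH HE X Y hx hy).
  pose proof (E_diff HH HE Y X hy hx).
  replace (fun w => Rabs (Y w - X w)) with (fun w => Rabs (X w - Y w)) in H1
    by (apply functional_extensionality; intro; apply Rabs_minus_sym).
  apply Rabs_le; lra.
Qed.

Lemma sum_le_E {Omega} {F} {H : (Omega -> R) -> Prop} {E} (HH : function_space F H)
  (HE : sublinear_expectation H E) (h : nat -> Omega -> R) :
  (forall k, H (h k)) -> forall K,
  H (fun w => sum_f_R0 (fun k => h k w) K) /\
  E (fun w => sum_f_R0 (fun k => h k w) K) <= sum_f_R0 (fun k => E (h k)) K.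
Proof.
  intros hh K; induction K as [|K [IH1 IH2]]; simpl.
  - split; [exact (hh 0%nat) | apply Rle_refl].
  - split. apply (fs_add _ _ HH); auto.
    eapply Rle_trans. apply (se_subadd _ _ HE); auto. lra.
Qed.

Lemma countable_subadd {Omega} {F} {H : (Omega -> R) -> Prop} {E} (HH : function_space F H)
  (HE : sublinear_expectation H E) (Hmc : monotone_continuous H E)
  (f : Omega -> R) (h : nat -> Omega -> R) (B : R) :
  H f -> (forall k, H (h k)) -> (forall k w, 0 <= h k w) ->
  (forall w eps, eps > 0 -> exists K, f w <= sum_f_R0 (fun k => h k w) K + eps) ->
  (forall K, sum_f_R0 (fun k => E (h k)) K <= B) ->
  E f <= B.
Proof.
  intros hf hh hpos hpt hB.
  set (Sm := fun K w => sum_f_R0 (fun k => h k w) K).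
  set (g := fun K w => Rmax (f w - Sm K w) 0).
  assert (HS : forall K, H (Sm K)) by (intro K; apply (proj1 (sum_le_E HH HE h hh K))).
  assert (Hg : forall K, H (g K)) by (intro K; apply (H_max0 HH); apply (H_sub HH); auto).
  assert (Smono : forall K w, Sm K w <= Sm (S K) w).
  { intros K w; unfold Sm; simpl; specialize (hpos (S K) w); lra. }
  assert (Smono2 : forall K K' w, (K <= K')%nat -> Sm K w <= Sm K' w).
  { intros K K' w hle; induction hle. lra. eapply Rle_trans; eauto. }
  assert (cv : Un_cv (fun n => E (g n)) 0).
  { apply Hmc; auto.
    - intros n w; unfold g. apply Rle_max_compat_r; specialize (Smono n w); lra.
    - intros w eps heps. destruct (hpt w (eps/2)) as [K hK]; [lra|].
      exists K; intros n hn. unfold R_dist, g. rewrite Rminus_0_r.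
      specialize (Smono2 K n w hn). unfold Sm in *.
      rewrite Rabs_right. unfold Rmax; destruct (Rle_dec _ _); lra.
      apply Rle_ge, Rmax_r. }
  assert (forall K, E f <= B + E (g K)).
  { intro K. apply Rle_trans with (E (fun w => Sm K w + g K w)).
    - apply (se_mono _ _ HE); auto. apply (fs_add _ _ HH); auto.
      intro w; unfold g. pose proof (Rmax_l (f w - Sm K w) 0). lra.
    - eapply Rle_trans. apply (se_subadd _ _ HE); auto.
      pose proof (proj2 (sum_le_E HH HE h hh K)). fold (Sm K) in H0.
      specialize (hB K). replace (fun w => Sm K w) with (Sm K) by reflexivity. lra. }
  apply Rnot_lt_le; intro hlt.
  destruct (cv (E f - B)) as [N hN]; [lra|].
  specialize (hN N (le_n N)). specialize (H0 N). unfold R_dist in hN.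
  rewrite Rminus_0_r in hN. pose proof (Rle_abs (E (g N))). lra.
Qed.

Fixpoint natsum (M : nat -> nat) (k : nat) : nat :=
  match k with O => M O | S k => (natsum M k + M (S k))%nat end.

Lemma natsum_ge M k : (M k <= natsum M k)%nat.
Proof. destruct k; simpl; lia. Qed.
Lemma natsum_mono M k : (natsum M k <= natsum M (S k))%nat.
Proof. simpl; lia. Qed.

Lemma geom_sum a K : sum_f_R0 (fun k => a * (/2) ^ (S k)) K = a * (1 - (/2) ^ (S K)).
Proof.
  induction K as [|K IHK]. simpl. field. rewrite tech5, IHK. simpl. field.
Qed.

Lemma pow_half_pos K : 0 < (/2) ^ K.
Proof. apply pow_lt; lra. Qed.

Lemma lemmaZ {Omega} {F} {H : (Omega -> R) -> Prop} {E} (HH : function_space F H)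
  (HE : sublinear_expectation H E) (Hmc : monotone_continuous H E)
  (Z : nat -> Omega -> R) :
  (forall n, H (Z n)) ->
  (forall w, Un_cv (fun n => Z n w) 0) ->
  (forall eps, eps > 0 -> exists N : nat, forall n m, (n >= N)%nat -> (m >= N)%nat ->
      E (fun w => Rabs (Z n w - Z m w)) < eps) ->
  Un_cv (fun n => E (fun w => Rabs (Z n w))) 0.
Proof.
  intros hZ hcv hC eps heps.
  set (P := fun k (N : nat) => forall n m, (n >= N)%nat -> (m >= N)%nat ->
      E (fun w => Rabs (Z n w - Z m w)) < eps / 4 * (/2) ^ (S k)).
  set (M := fun k => epsilon (inhabits 0%nat) (P k)).
  assert (hM : forall k, P k (M k)).
  { intro k. apply epsilon_spec. apply hC. pose proof (pow_half_pos (S k)).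
    apply Rmult_lt_0_compat; lra. }
  destruct (hC (eps/4)) as [N hN]; [lra|].
  exists N; intros n hn.
  set (m := fun k => (n + k + natsum M k)%nat).
  set (h := fun k w => Rabs (Z (m (S k)) w - Z (m k) w)).
  assert (Hh : forall k, H (h k)) by (intro k; apply (H_absdiff HH); auto).
  assert (Habs : forall j, H (fun w => Rabs (Z j w))) by (intro j; apply (fs_abs _ _ HH); auto).
  assert (key : E (fun w => Rabs (Z (m O) w)) <= eps / 4).
  { apply (countable_subadd HH HE Hmc _ h); auto.
    - intros k w; unfold h; apply Rabs_pos.
    - intros w e he. destruct (hcv w e he) as [K0 hK0].
      exists K0.
      assert (tele : forall K, Rabs (Z (m O) w) <= sum_f_R0 (fun k => h k w) K + Rabs (Z (m (S K)) w)).
      { intro K; induction K; simpl.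
        - unfold h. pose proof (Rabs_triang (Z (m 0%nat) w - Z (m 1%nat) w) (Z (m 1%nat) w)).
          replace (Z (m 0%nat) w - Z (m 1%nat) w + Z (m 1%nat) w) with (Z (m 0%nat) w) in H0 by ring.
          rewrite Rabs_minus_sym in H0. lra.
        - pose proof (Rabs_triang (Z (m (S K)) w - Z (m (S (S K))) w) (Z (m (S (S K))) w)).
          replace (Z (m (S K)) w - Z (m (S (S K))) w + Z (m (S (S K))) w) with (Z (m (S K)) w) in H0 by ring.
          unfold h at 2. rewrite Rabs_minus_sym in H0. lra. }
      specialize (tele K0). assert (m (S K0) >= K0)%nat by (unfold m; lia).
      specialize (hK0 _ H0). unfold R_dist in hK0. rewrite Rminus_0_r in hK0. lra.
    - intro K. eapply Rle_trans.
      apply sum_Rle with (Bn := fun k => eps / 4 * (/2) ^ (S k)).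
      + intros k _. left. apply hM; unfold m.
        * pose proof (natsum_ge M k). simpl. lia.
        * pose proof (natsum_ge M k). lia.
      + rewrite geom_sum. pose proof (pow_half_pos (S K)).
        assert ((/2) ^ S K <= 1).
        { left; apply (pow_lt_1_compat (/2) (S K)); [lra | lia]. } nra. }
  assert (hm0 : (m O >= N)%nat) by (unfold m; lia).
  pose proof (hN n (m O) hn hm0) as hd.
  pose proof (E_diff HH HE _ _ (Habs n) (Habs (m O))) as hdiff.
  assert (E (fun w => Rabs (Rabs (Z n w) - Rabs (Z (m O) w))) <= E (fun w => Rabs (Z n w - Z (m O) w))).
  { apply (se_mono _ _ HE). apply (H_absdiff HH); auto. apply (H_absdiff HH); auto.
    intro w; apply Rabs_triang_inv2. }
  assert (0 <= E (fun w => Rabs (Z n w))).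
  { apply (E_nonneg HH HE); auto. intro; apply Rabs_pos. }
  unfold R_dist. rewrite Rminus_0_r, Rabs_right by lra. lra.
Qed.

Lemma approx_cvE {Omega} {F} {H : (Omega -> R) -> Prop} {E} (HH : function_space F H)
  (HE : sublinear_expectation H E) X Xs :
  L1_approx H E X Xs -> exists l, Un_cv (fun n => E (Xs n)) l.
Proof.
  intros [hX [_ hC]].
  assert (Cauchy_crit (fun n => E (Xs n))).
  { intros eps heps. destruct (hC eps heps) as [N hN]. exists N; intros n m hn hm.
    unfold R_dist. eapply Rle_lt_trans. apply (E_absdiff HH HE); auto. apply hN; auto. }
  destruct (R_complete _ H0) as [l hl]. eauto.
Qed.

Lemma lip2 {Omega} {F} {H : (Omega -> R) -> Prop} {E} (HH : function_space F H)
  (HE : sublinear_expectation H E) X Xs Y Ys (g : R -> R -> R) (L : R) :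
  L1_approx H E X Xs -> L1_approx H E Y Ys -> 0 <= L ->
  (forall a b a' b', Rabs (g a b - g a' b') <= L * (Rabs (a - a') + Rabs (b - b'))) ->
  (forall U V, H U -> H V -> H (fun w => g (U w) (V w))) ->
  L1_approx H E (fun w => g (X w) (Y w)) (fun n w => g (Xs n w) (Ys n w)).
Proof.
  intros [hX [pX cX]] [hY [pY cY]] hL hg hH.
  split; [|split].
  - intro n; apply hH; auto.
  - intros w eps heps.
    destruct (pX w (eps / (2 * (L + 1)))) as [N1 h1].
    { apply Rdiv_lt_0_compat; lra. }
    destruct (pY w (eps / (2 * (L + 1)))) as [N2 h2].
    { apply Rdiv_lt_0_compat; lra. }
    exists (max N1 N2); intros n hn. unfold R_dist in *.
    specialize (h1 n ltac:(lia)); specialize (h2 n ltac:(lia)).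
    eapply Rle_lt_trans. apply hg.
    assert (L * (eps / (2 * (L + 1))) < eps / 2).
    { apply Rmult_lt_reg_r with (2 * (L + 1)); [lra|].
      field_simplify; [nra | lra]. }
    assert (0 <= Rabs (Xs n w - X w)) by apply Rabs_pos.
    assert (0 <= Rabs (Ys n w - Y w)) by apply Rabs_pos.
    nra.
  - intros eps heps.
    destruct (cX (eps / (2 * (L + 1)))) as [N1 h1].
    { apply Rdiv_lt_0_compat; lra. }
    destruct (cY (eps / (2 * (L + 1)))) as [N2 h2].
    { apply Rdiv_lt_0_compat; lra. }
    exists (max N1 N2); intros n m hn hm.
    specialize (h1 n m ltac:(lia) ltac:(lia)); specialize (h2 n m ltac:(lia) ltac:(lia)).
    assert (HA : H (fun w => Rabs (Xs n w - Xs m w))) by (apply (H_absdiff HH); auto).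
    assert (HB : H (fun w => Rabs (Ys n w - Ys m w))) by (apply (H_absdiff HH); auto).
    eapply Rle_lt_trans.
    apply (se_mono _ _ HE) with (Y := fun w => L * Rabs (Xs n w - Xs m w) + L * Rabs (Ys n w - Ys m w)).
    + apply (H_absdiff HH); apply hH; auto.
    + apply (fs_add _ _ HH); apply (fs_scal _ _ HH); auto.
    + intro w. specialize (hg (Xs n w) (Ys n w) (Xs m w) (Ys m w)). lra.
    + eapply Rle_lt_trans. apply (se_subadd _ _ HE); apply (fs_scal _ _ HH); auto.
      rewrite (se_poshom _ _ HE L _ hL HA), (se_poshom _ _ HE L _ hL HB).
      assert (L * (eps / (2 * (L + 1))) < eps / 2).
      { apply Rmult_lt_reg_r with (2 * (L + 1)); [lra|].
        field_simplify; [nra | lra]. }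
      assert (0 <= E (fun w => Rabs (Xs n w - Xs m w))).
      { apply (E_nonneg HH HE); auto; intro; apply Rabs_pos. }
      assert (0 <= E (fun w => Rabs (Ys n w - Ys m w))).
      { apply (E_nonneg HH HE); auto; intro; apply Rabs_pos. }
      nra.
Qed.

Lemma WD {Omega} {F} {H : (Omega -> R) -> Prop} {E} (HH : function_space F H)
  (HE : sublinear_expectation H E) (Hmc : monotone_continuous H E) X Xs Ys a b :
  L1_approx H E X Xs -> L1_approx H E X Ys ->
  Un_cv (fun n => E (Xs n)) a -> Un_cv (fun n => E (Ys n)) b -> a = b.
Proof.
  intros hA hB ha hb.
  pose proof (lip2 HH HE _ _ _ _ (fun a b => a - b) 1 hA hB ltac:(lra)) as hZ.
  assert (hZ' : L1_approx H E (fun w => X w - X w) (fun n w => Xs n w - Ys n w)).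
  { apply hZ. intros. rewrite Rmult_1_l.
    replace (a0 - b0 - (a' - b')) with ((a0 - a') + - (b0 - b')) by ring.
    eapply Rle_trans. apply Rabs_triang. rewrite Rabs_Ropp. lra.
    intros; apply (H_sub HH); auto. }
  destruct hZ' as [hZ1 [hZ2 hZ3]].
  assert (cvZ : Un_cv (fun n => E (fun w => Rabs (Xs n w - Ys n w))) 0).
  { apply (lemmaZ HH HE Hmc (fun n w => Xs n w - Ys n w)); auto.
    intro w. replace 0 with (X w - X w) by ring. apply hZ2. }
  destruct hA as [hA1 _]; destruct hB as [hB1 _].
  destruct (Req_dec a b) as [|hne]; auto; exfalso.
  assert (hpos : 0 < Rabs (a - b)) by (apply Rabs_pos_lt; lra).
  set (e := Rabs (a - b)) in *.
  destruct (ha (e/3)) as [N1 h1]; [lra|].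
  destruct (hb (e/3)) as [N2 h2]; [lra|].
  destruct (cvZ (e/3)) as [N3 h3]; [lra|].
  set (n := max N1 (max N2 N3)).
  specialize (h1 n ltac:(lia)); specialize (h2 n ltac:(lia)); specialize (h3 n ltac:(lia)).
  unfold R_dist in *. rewrite Rminus_0_r in h3.
  pose proof (E_absdiff HH HE _ _ (hA1 n) (hB1 n)).
  pose proof (Rle_abs (E (fun w => Rabs (Xs n w - Ys n w)))).
  assert (Rabs (a - b) <= Rabs (a - E (Xs n)) + Rabs (E (Xs n) - E (Ys n)) + Rabs (E (Ys n) - b)).
  { replace (a - b) with ((a - E (Xs n)) + (E (Xs n) - E (Ys n)) + (E (Ys n) - b)) by ring.
    eapply Rle_trans. apply Rabs_triang. apply Rplus_le_compat_r. apply Rabs_triang. }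
  rewrite (Rabs_minus_sym (E (Xs n)) a) in h1.
  unfold e in *. lra.
Qed.

Lemma E1_spec {Omega} {F} {H : (Omega -> R) -> Prop} {E} (HH : function_space F H)
  (HE : sublinear_expectation H E) (Hmc : monotone_continuous H E) X Xs :
  L1_approx H E X Xs -> Un_cv (fun n => E (Xs n)) (Defs.E1 H E X).
Proof.
  intros hA. destruct (approx_cvE HH HE X Xs hA) as [l hl].
  assert (ex : exists r, exists Ys, L1_approx H E X Ys /\ Un_cv (fun n => E (Ys n)) r) by eauto.
  pose proof (epsilon_spec (inhabits 0) _ ex) as [Ys [hY hYl]].
  fold (Defs.E1 H E X) in hYl.
  rewrite <- (WD HH HE Hmc X Xs Ys l (Defs.E1 H E X)); auto.
Qed.

Lemma inL1_lip2 {Omega} {F} {H : (Omega -> R) -> Prop} {E} (HH : function_space F H)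
  (HE : sublinear_expectation H E) X Y (g : R -> R -> R) (L : R) :
  inL1 H E X -> inL1 H E Y -> 0 <= L ->
  (forall a b a' b', Rabs (g a b - g a' b') <= L * (Rabs (a - a') + Rabs (b - b'))) ->
  (forall U V, H U -> H V -> H (fun w => g (U w) (V w))) ->
  inL1 H E (fun w => g (X w) (Y w)).
Proof.
  intros [Xs hX] [Ys hY] hL hg hH. eexists. eapply lip2; eauto.
Qed.

Lemma lip_add : forall a b a' b' : R, Rabs ((a + b) - (a' + b')) <= 1 * (Rabs (a - a') + Rabs (b - b')).
Proof.
  intros. replace (a + b - (a' + b')) with ((a - a') + (b - b')) by ring.
  rewrite Rmult_1_l; apply Rabs_triang.
Qed.

Lemma inL1_add {Omega} {F} {H : (Omega -> R) -> Prop} {E} (HH : function_space F H)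
  (HE : sublinear_expectation H E) X Y :
  inL1 H E X -> inL1 H E Y -> inL1 H E (fun w => X w + Y w).
Proof.
  intros hX hY. apply (inL1_lip2 HH HE X Y (fun a b => a + b) 1); auto; try lra.
  apply lip_add. intros; apply (fs_add _ _ HH); auto.
Qed.

Lemma inL1_map {Omega} {F} {H : (Omega -> R) -> Prop} {E} (HH : function_space F H)
  (HE : sublinear_expectation H E) X (g : R -> R) (L : R) :
  inL1 H E X -> 0 <= L ->
  (forall a a', Rabs (g a - g a') <= L * Rabs (a - a')) ->
  (forall U, H U -> H (fun w => g (U w))) ->
  inL1 H E (fun w => g (X w)).
Proof.
  intros hX hL hg hH.
  apply (inL1_lip2 HH HE X X (fun a b => g a) L); auto.
  intros. specialize (hg a a'). pose proof (Rabs_pos (b - b')). nra.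
Qed.

Lemma E1_H {Omega} {F} {H : (Omega -> R) -> Prop} {E} (HH : function_space F H)
  (HE : sublinear_expectation H E) (Hmc : monotone_continuous H E) X :
  H X -> inL1 H E X /\ Defs.E1 H E X = E X.
Proof.
  intros hX.
  assert (hA : L1_approx H E X (fun _ => X)).
  { split; [|split].
    - auto.
    - intros w e he; exists 0%nat; intros; unfold R_dist; rewrite Rminus_diag, Rabs_R0; lra.
    - intros e he; exists 0%nat; intros.
      replace (fun w => Rabs (X w - X w)) with (fun _ : Omega => 0).
      rewrite (se_const _ _ HE); lra.
      apply functional_extensionality; intro; rewrite Rminus_diag, Rabs_R0; auto. }
  split. exists (fun _ => X); auto.
  pose proof (E1_spec HH HE Hmc X _ hA).
  apply (UL_sequence (fun _ => E X)); auto.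
  intros e he; exists 0%nat; intros; unfold R_dist; rewrite Rminus_diag, Rabs_R0; lra.
Qed.

Lemma E1_add {Omega} {F} {H : (Omega -> R) -> Prop} {E} (HH : function_space F H)
  (HE : sublinear_expectation H E) (Hmc : monotone_continuous H E) X Y :
  inL1 H E X -> inL1 H E Y -> Defs.E1 H E (fun w => X w + Y w) <= Defs.E1 H E X + Defs.E1 H E Y.
Proof.
  intros [Xs hX] [Ys hY].
  pose proof (lip2 HH HE X Xs Y Ys (fun a b => a + b) 1 hX hY ltac:(lra) lip_add
     ltac:(intros; apply (fs_add _ _ HH); auto)) as hS.
  pose proof (E1_spec HH HE Hmc _ _ hS) as c1.
  pose proof (E1_spec HH HE Hmc _ _ hX) as c2.
  pose proof (E1_spec HH HE Hmc _ _ hY) as c3.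
  eapply Rle_cv_lim; [|exact c1|exact (CV_plus _ _ _ _ c2 c3)].
  intro n; simpl. apply (se_subadd _ _ HE); [apply hX | apply hY].
Qed.

Lemma E1_scal {Omega} {F} {H : (Omega -> R) -> Prop} {E} (HH : function_space F H)
  (HE : sublinear_expectation H E) (Hmc : monotone_continuous H E) X l :
  0 <= l -> inL1 H E X -> Defs.E1 H E (fun w => l * X w) = l * Defs.E1 H E X.
Proof.
  intros hl [Xs hX].
  assert (lipl : forall a b a' b' : R, Rabs (l * a - l * a') <= l * (Rabs (a - a') + Rabs (b - b'))).
  { intros. replace (l * a - l * a') with (l * (a - a')) by ring. rewrite Rabs_mult, Rabs_right by lra.
    pose proof (Rabs_pos (b - b')). nra. }
  pose proof (lip2 HH HE X Xs X Xs (fun a b => l * a) l hX hX hl lipl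
     ltac:(intros; apply (fs_scal _ _ HH); auto)) as hS.
  pose proof (E1_spec HH HE Hmc _ _ hS) as c1.
  pose proof (E1_spec HH HE Hmc _ _ hX) as c2.
  apply (UL_sequence _ _ _ c1).
  replace (fun n => E (fun w => l * Xs n w)) with (fun n => l * E (Xs n)).
  apply CV_mult; auto. intros e he; exists 0%nat; intros; unfold R_dist; rewrite Rminus_diag, Rabs_R0; lra.
  apply functional_extensionality; intro n. rewrite (se_poshom _ _ HE); auto. apply hX.
Qed.

Lemma lip_max0 : forall a b a' b' : R,
  Rabs (Rmax (a - b) 0 - Rmax (a' - b') 0) <= 1 * (Rabs (a - a') + Rabs (b - b')).
Proof.
  intros. rewrite Rmult_1_l.
  apply Rle_trans with (Rabs ((a - b) - (a' - b'))).
  - unfold Rmax; destruct (Rle_dec (a - b) 0); destruct (Rle_dec (a' - b') 0);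
    apply Rabs_le; split; try (pose proof (Rle_abs ((a - b) - (a' - b')));
      pose proof (Rle_abs (-((a - b) - (a' - b')))); rewrite Rabs_Ropp in *; lra).
  - replace (a - b - (a' - b')) with ((a - a') + - (b - b')) by ring.
    eapply Rle_trans. apply Rabs_triang. rewrite Rabs_Ropp. lra.
Qed.

Lemma E1_mono {Omega} {F} {H : (Omega -> R) -> Prop} {E} (HH : function_space F H)
  (HE : sublinear_expectation H E) (Hmc : monotone_continuous H E) X Y :
  inL1 H E X -> inL1 H E Y -> (forall w, X w <= Y w) -> Defs.E1 H E X <= Defs.E1 H E Y.
Proof.
  intros [Xs hX] [Ys hY] hle.
  pose proof (lip2 HH HE X Xs Y Ys (fun a b => Rmax (a - b) 0) 1 hX hY ltac:(lra) lip_max0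
     ltac:(intros; apply (H_max0 HH); apply (H_sub HH); auto)) as hZ.
  destruct hZ as [hZ1 [hZ2 hZ3]].
  assert (cvZ : Un_cv (fun n => E (fun w => Rabs (Rmax (Xs n w - Ys n w) 0))) 0).
  { apply (lemmaZ HH HE Hmc (fun n w => Rmax (Xs n w - Ys n w) 0)); auto.
    intro w. specialize (hZ2 w). simpl in hZ2.
    rewrite Rmax_right in hZ2 by (specialize (hle w); lra). exact hZ2. }
  pose proof (E1_spec HH HE Hmc _ _ hX) as c2.
  pose proof (E1_spec HH HE Hmc _ _ hY) as c3.
  pose proof (CV_plus _ _ _ _ c3 cvZ) as c4. rewrite Rplus_0_r in c4.
  eapply Rle_cv_lim; [|exact c2|exact c4].
  intro n; simpl.
  destruct hX as [hX1 _]; destruct hY as [hY1 _].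
  assert (HA : H (fun w => Rabs (Rmax (Xs n w - Ys n w) 0))).
  { apply (fs_abs _ _ HH). apply hZ1. }
  eapply Rle_trans; [|apply (se_subadd _ _ HE); auto].
  apply (se_mono _ _ HE); auto. apply (fs_add _ _ HH); auto.
  intro w. pose proof (Rmax_l (Xs n w - Ys n w) 0). pose proof (Rle_abs (Rmax (Xs n w - Ys n w) 0)). lra.
Qed.

Lemma F_ext {Omega} (F : (Omega -> Prop) -> Prop) (A B : Omega -> Prop) :
  (forall w, A w <-> B w) -> F A -> F B.
Proof.
  intros h hA. replace B with A; auto.
  apply functional_extensionality; intro w; apply propositional_extensionality; auto.
Qed.

Lemma F_inter {Omega} (F : (Omega -> Prop) -> Prop) (HF : sigma_algebra F) (A : nat -> Omega -> Prop) :
  (forall n, F (A n)) -> F (fun w => forall n, A n w).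
Proof.
  intros hA.
  assert (F (fun w => ~ (exists n, ~ A n w))).
  { apply (sa_compl _ HF). apply (sa_union _ HF). intro n; apply (sa_compl _ HF); auto. }
  eapply F_ext; [|exact H]. intro w; split.
  - intros h n. apply NNPP; intro hn; apply h; eauto.
  - intros h [n hn]; apply hn, h.
Qed.

Lemma inv_small (e : R) : 0 < e -> exists k : nat, / INR (S k) < e.
Proof.
  intros he. destruct (archimed_cor1 e he) as [N [h1 h2]].
  exists (N - 1)%nat. replace (S (N - 1)) with N by lia. auto.
Qed.

Lemma INR_S_pos k : 0 < / INR (S k).
Proof. apply Rinv_0_lt_compat. apply lt_0_INR; lia. Qed.

Lemma F_gt {Omega} (F : (Omega -> Prop) -> Prop) (HF : sigma_algebra F) (V : Omega -> R) a :
  measurable F V -> F (fun w => V w > a).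
Proof.
  intros hV. apply (F_ext F (fun w => ~ V w <= a)). intro; lra.
  apply (sa_compl _ HF). apply hV.
Qed.

Lemma F_ge_lim {Omega} (F : (Omega -> Prop) -> Prop) (HF : sigma_algebra F)
  (Vs : nat -> Omega -> R) (V : Omega -> R) c :
  (forall n, measurable F (Vs n)) -> (forall w, Un_cv (fun n => Vs n w) (V w)) ->
  F (fun w => V w >= c).
Proof.
  intros hm hcv.
  apply (F_ext F (fun w => forall k, exists N, forall n, (n >= N)%nat -> Vs n w > c - / INR (S k))).
  - intro w; split.
    + intros h. apply Rnot_lt_ge; intro hlt.
      destruct (inv_small ((c - V w) / 2)) as [k hk]; [lra|].
      destruct (h k) as [N hN].
      destruct (hcv w ((c - V w)/2)) as [N2 h2]; [lra|].
      specialize (hN (max N N2) ltac:(lia)); specialize (h2 (max N N2) ltac:(lia)).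
      unfold R_dist in h2. pose proof (Rle_abs (Vs (max N N2) w - V w)). lra.
    + intros h k. destruct (hcv w (/ INR (S k))) as [N hN]. apply INR_S_pos.
      exists N; intros n hn. specialize (hN n hn). unfold R_dist in hN.
      pose proof (Rle_abs (- (Vs n w - V w))). rewrite Rabs_Ropp in H. lra.
  - apply (F_inter F HF); intro k. apply (sa_union _ HF); intro N.
    apply (F_inter F HF (fun n w => (n >= N)%nat -> Vs n w > c - / INR (S k))); intro n.
    destruct (classic (n >= N)%nat) as [hn|hn].
    + apply (F_ext F (fun w => Vs n w > c - / INR (S k))). intro; tauto.
      apply F_gt; auto.
    + apply (F_ext F (fun _ => True)). intro; tauto. apply (sa_full _ HF).
Qed.

Lemma inL1_indic {Omega} {F} {H : (Omega -> R) -> Prop} {E} (HF : sigma_algebra F)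
  (HH : function_space F H) (HE : sublinear_expectation H E) X c :
  inL1 H E X -> inL1 H E (indic (fun w => Rabs (X w) >= c) (fun w => Rabs (X w))).
Proof.
  intros [Xs [hX1 [hX2 hX3]]].
  set (A := fun w => Rabs (X w) >= c).
  assert (cvabs : forall w, Un_cv (fun n => Rabs (Xs n w)) (Rabs (X w))).
  { intros w e he. destruct (hX2 w e he) as [N hN]. exists N; intros n hn.
    specialize (hN n hn). unfold R_dist in *. eapply Rle_lt_trans; [apply Rabs_triang_inv2|auto]. }
  assert (hA : F A).
  { apply (F_ge_lim F HF (fun n w => Rabs (Xs n w))); auto.
    intro n. apply (fs_meas _ _ HH). apply (fs_abs _ _ HH); auto. }
  exists (fun n => indic A (fun w => Rabs (Xs n w))).
  split; [|split].
  - intro n. apply (fs_indic _ _ HH); auto. apply (fs_abs _ _ HH); auto.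
  - intro w. unfold indic. destruct (excluded_middle_informative (A w)).
    + apply cvabs.
    + intros e he; exists 0%nat; intros; unfold R_dist; rewrite Rminus_diag, Rabs_R0; lra.
  - intros e he. destruct (hX3 e he) as [N hN]. exists N; intros n m hn hm.
    eapply Rle_lt_trans; [|apply (hN n m hn hm)].
    apply (se_mono _ _ HE).
    + apply (H_absdiff HH); apply (fs_indic _ _ HH); auto; apply (fs_abs _ _ HH); auto.
    + apply (H_absdiff HH); auto.
    + intro w. unfold indic. destruct (excluded_middle_informative (A w)).
      * apply Rabs_triang_inv2.
      * rewrite Rminus_diag, Rabs_R0. apply Rabs_pos.
Qed.

Lemma conv_aux (lam x : nat -> R) c m :
  (forall i, (i <= m)%nat -> 0 <= lam i) ->
  Rabs (sum_f_R0 (fun i => lam i * x i) m) <= sum_f_R0 (fun i => lam i * Rabs (x i)) m /\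
  sum_f_R0 (fun i => lam i * Rabs (x i)) m - c * sum_f_R0 lam m
    <= sum_f_R0 (fun i => lam i * Rmax (Rabs (x i) - c) 0) m /\
  0 <= sum_f_R0 (fun i => lam i * Rmax (Rabs (x i) - c) 0) m.
Proof.
  induction m as [|m IH]; intros hl.
  - simpl. specialize (hl 0%nat (le_n _)). rewrite Rabs_mult, (Rabs_right (lam 0%nat)) by lra.
    pose proof (Rmax_l (Rabs (x 0%nat) - c) 0). pose proof (Rmax_r (Rabs (x 0%nat) - c) 0).
    split; [lra|split; nra].
  - destruct IH as [I1 [I2 I3]]. intros; apply hl; lia.
    rewrite !tech5. specialize (hl (S m) (le_n _)).
    pose proof (Rmax_l (Rabs (x (S m)) - c) 0). pose proof (Rmax_r (Rabs (x (S m)) - c) 0).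
    split; [|split; nra].
    eapply Rle_trans. apply Rabs_triang. rewrite Rabs_mult, (Rabs_right (lam (S m))) by lra. lra.
Qed.

Lemma conv_pt (lam x : nat -> R) c n :
  (forall i, (i <= n)%nat -> 0 <= lam i) -> sum_f_R0 lam n = 1 ->
  Rmax (Rabs (sum_f_R0 (fun i => lam i * x i) n) - c) 0
    <= sum_f_R0 (fun i => lam i * Rmax (Rabs (x i) - c) 0) n.
Proof.
  intros hl hs. destruct (conv_aux lam x c n hl) as [I1 [I2 I3]].
  rewrite hs in I2. apply Rmax_lub; lra.
Qed.

Lemma sum_E1 {Omega} {F} {H : (Omega -> R) -> Prop} {E} (HH : function_space F H)
  (HE : sublinear_expectation H E) (Hmc : monotone_continuous H E)
  (lam : nat -> R) (G : nat -> Omega -> R) (b : R) n :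
  (forall i, (i <= n)%nat -> 0 <= lam i /\ inL1 H E (G i) /\ Defs.E1 H E (G i) <= b) ->
  inL1 H E (fun w => sum_f_R0 (fun i => lam i * G i w) n) /\
  Defs.E1 H E (fun w => sum_f_R0 (fun i => lam i * G i w) n) <= sum_f_R0 lam n * b.
Proof.
  assert (scal : forall l V, 0 <= l -> inL1 H E V -> inL1 H E (fun w => l * V w)).
  { intros l V hl hV. apply (inL1_map HH HE V (fun a => l * a) l); auto.
    intros. replace (l * a - l * a') with (l * (a - a')) by ring.
    rewrite Rabs_mult, Rabs_right by lra; lra.
    intros; apply (fs_scal _ _ HH); auto. }
  induction n as [|n IH]; intros hG.
  - simpl. destruct (hG 0%nat (le_n _)) as [h1 [h2 h3]].
    split. apply scal; auto. rewrite (E1_scal HH HE Hmc); auto. nra.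
  - destruct IH as [I1 I2]. intros; apply hG; lia.
    destruct (hG (S n) (le_n _)) as [h1 [h2 h3]].
    simpl. split. apply (inL1_add HH HE); auto.
    eapply Rle_trans. apply (E1_add HH HE Hmc); auto.
    rewrite (E1_scal HH HE Hmc); auto. nra.
Qed.

Lemma pt_f1 x c : (if excluded_middle_informative (Rabs x >= c) then Rabs x else 0)
  <= 2 * Rmax (Rabs x - c / 2) 0.
Proof.
  destruct (excluded_middle_informative _).
  - pose proof (Rmax_l (Rabs x - c/2) 0). pose proof (Rmax_r (Rabs x - c/2) 0). lra.
  - pose proof (Rmax_r (Rabs x - c/2) 0). lra.
Qed.

Lemma pt_f2 x c : 0 <= c -> Rmax (Rabs x - c) 0 <=
  (if excluded_middle_informative (Rabs x >= c) then Rabs x else 0).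
Proof.
  intros hc. destruct (excluded_middle_informative _).
  - apply Rmax_lub; pose proof (Rabs_pos x); lra.
  - apply Rmax_lub; lra.
Qed.

Lemma pt_f3 y z c : Rmax (Rabs y - c) 0 <= Rmax (Rabs z - c) 0 + Rabs (y - z).
Proof.
  pose proof (Rabs_triang_inv y z). pose proof (Rmax_l (Rabs z - c) 0).
  pose proof (Rmax_r (Rabs z - c) 0). pose proof (Rabs_pos (y - z)).
  apply Rmax_lub; lra.
Qed.

Lemma sum_inL1 {Omega} {F} {H : (Omega -> R) -> Prop} {E} (HH : function_space F H)
  (HE : sublinear_expectation H E)
  (lam : nat -> R) (G : nat -> Omega -> R) n :
  (forall i, (i <= n)%nat -> inL1 H E (G i)) ->
  inL1 H E (fun w => sum_f_R0 (fun i => lam i * G i w) n).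
Proof.
  assert (scal : forall l V, inL1 H E V -> inL1 H E (fun w => l * V w)).
  { intros l V hV. apply (inL1_map HH HE V (fun a => l * a) (Rabs l)); auto.
    apply Rabs_pos.
    intros. replace (l * a - l * a') with (l * (a - a')) by ring.
    rewrite Rabs_mult; lra.
    intros; apply (fs_scal _ _ HH); auto. }
  induction n as [|n IH]; intros hG.
  - simpl. apply scal; auto.
  - simpl. apply (inL1_add HH HE); auto.
Qed.

Theorem corollary2p14 (Omega : Type) (F : (Omega -> Prop) -> Prop)
  (H : (Omega -> R) -> Prop) (E : (Omega -> R) -> R)
  (HF : sigma_algebra F) (HH : function_space F H)
  (HE : sublinear_expectation H E) (Hmc : monotone_continuous H E)
  (K : (Omega -> R) -> Prop) :
  (forall X, K X -> inL1 H E X) ->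
  uniformly_integrable H E K ->
  uniformly_integrable H E (L1_closure H E (convex_hull K)).
Proof.
  intros hK [_ hUI]. split.
  { intros Y [hY _]; auto. }
  intros eps heps.
  destruct (hUI (eps/2) ltac:(lra)) as [c0' hc0'].
  exists (2 * Rmax c0' 0). intros c hc Y [hY hcl].
  set (c' := c / 2).
  assert (hc' : c' >= c0' /\ 0 <= c').
  { pose proof (Rmax_l c0' 0); pose proof (Rmax_r c0' 0). unfold c'; split; lra. }
  assert (Pin : forall V, inL1 H E V -> inL1 H E (fun w => Rmax (Rabs (V w) - c') 0)).
  { intros V hV. apply (inL1_map HH HE V (fun a => Rmax (Rabs a - c') 0) 1); auto; try lra.
    - intros a a'. pose proof (lip_max0 (Rabs a) c' (Rabs a') c').
      rewrite Rminus_diag, Rabs_R0, Rplus_0_r in H0.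
      eapply Rle_trans; [exact H0|]. pose proof (Rabs_triang_inv2 a a'). lra.
    - intros U hU. apply (H_max0 HH). apply (H_sub HH). apply (fs_abs _ _ HH); auto.
      apply (fs_const _ _ HH). }
  apply Rle_plus_epsilon; intros d hd.
  destruct (hcl (d/2) ltac:(lra)) as [Z [[n [lam [Xs [hXs [hsum hZ]]]]] hYZ]].
  assert (hZeq : Z = fun w => sum_f_R0 (fun i => lam i * Xs i w) n)
    by (apply functional_extensionality; auto).
  assert (hZin : inL1 H E Z).
  { rewrite hZeq. apply (sum_inL1 HH HE lam Xs n).
    intros i hi; destruct (hXs i hi); auto. }
  assert (hYZin : inL1 H E (fun w => Rabs (Y w - Z w))).
  { apply (inL1_lip2 HH HE Y Z (fun a b => Rabs (a - b)) 1); auto; try lra.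
    - intros a b a' b'. eapply Rle_trans. apply Rabs_triang_inv2.
      replace (a - b - (a' - b')) with ((a - a') + - (b - b')) by ring.
      eapply Rle_trans. apply Rabs_triang. rewrite Rabs_Ropp. lra.
    - intros; apply (H_absdiff HH); auto. }
  assert (s1 : Defs.E1 H E (indic (fun w => Rabs (Y w) >= c) (fun w => Rabs (Y w)))
            <= 2 * Defs.E1 H E (fun w => Rmax (Rabs (Y w) - c') 0)).
  { rewrite <- (E1_scal HH HE Hmc); [|lra|apply Pin; auto].
    apply (E1_mono HH HE Hmc).
    - apply (inL1_indic HF HH HE); auto.
    - apply (inL1_map HH HE _ (fun a => 2 * a) 2); auto; try lra.
      intros. replace (2 * a - 2 * a') with (2 * (a - a')) by ring.
      rewrite Rabs_mult, Rabs_right by lra; lra.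
      intros; apply (fs_scal _ _ HH); auto.
    - intro w. unfold indic, c'. apply pt_f1. }
  assert (s2 : Defs.E1 H E (fun w => Rmax (Rabs (Y w) - c') 0)
            <= Defs.E1 H E (fun w => Rmax (Rabs (Z w) - c') 0) + Defs.E1 H E (fun w => Rabs (Y w - Z w))).
  { eapply Rle_trans; [|apply (E1_add HH HE Hmc); auto].
    apply (E1_mono HH HE Hmc); auto.
    apply (inL1_add HH HE); auto.
    intro w; apply pt_f3. }
  assert (s3 : Defs.E1 H E (fun w => Rmax (Rabs (Z w) - c') 0) <= eps / 2).
  { set (G := fun i => indic (fun w => Rabs (Xs i w) >= c') (fun w => Rabs (Xs i w))).
    destruct (sum_E1 HH HE Hmc lam G (eps/2) n) as [A1 A2].
    { intros i hi; destruct (hXs i hi) as [h1 h2]. split; auto. split.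
      apply (inL1_indic HF HH HE); auto. apply hc0'; auto; lra. }
    rewrite hsum, Rmult_1_l in A2.
    eapply Rle_trans; [|exact A2].
    apply (E1_mono HH HE Hmc); auto.
    intro w. rewrite hZ. eapply Rle_trans. apply conv_pt; auto.
    intros i hi; apply (hXs i hi).
    apply sum_Rle. intros i hi. apply Rmult_le_compat_l. apply (hXs i hi).
    unfold G, indic. apply pt_f2. lra. }
  lra.
Qed.
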